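(* Let $\{\mathcal Z_n\}$ be a Galton–Watson process with countably many types and irreducible mean progeny matrix $M$, and assume that the dichotomy property holds. If there exist $\lambda\le1$ and a vector $\boldsymbol x=(x_1,x_2,\dots)$ with $x_i>0$ for all $i$, $\sum_i x_i<\infty$ and $\boldsymbol xM\le\lambda\boldsymbol x$ componentwise, then $\boldsymbol q=\boldsymbol 1$.
   Context: A (multitype) Galton–Watson process with type set $\mathcal S=\{1,2,3,\dots\}$ is $\{\mathcal Z_n=(Z_{n1},Z_{n2},\dots)\}_{n\in\mathbb N}$, $Z_{n\ell}$ the number of type-$\ell$ individuals in generation $n$, started from one individual of type $\varphi_0$; $|\mathcal Z_n|=\sum_\ell Z_{n\ell}$. The mean progeny matrix is $M_{ij}=\partial P_i/\partial s_j|_{\boldsymbol s=\boldsymbol 1}$ (assumed finite), $P_i$ being the progeny generating function of type $i$. Global extinction: $q_i=\mathbb P[\lim_n|\mathcal Z_n|=0\mid\varphi_0=i]$. The dichotomy property holds if for every initial type $i$, with probability 1 either $|\mathcal Z_n|=0$ eventually or $|\mathcal Z_n|\to\infty$. *)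

(* Defs.v *)
From HB Require Import structures.
From mathcomp Require Import all_boot all_order all_algebra.
From mathcomp Require Import all_classical all_reals all_analysis.
Set Implicit Arguments. Unset Strict Implicit. Unset Printing Implicit Defensive.
Import Order.TTheory GRing.Theory Num.Theory.
Local Open Scope classical_set_scope.
Local Open Scope ring_scope.

(* Types are indexed by nat (type 0,1,2,... instead of 1,2,3,...).
   A generation is represented by the list of the types of its individuals;
   the offspring of one individual is a finite list of the children's types. *)

Definition mutually_independent d (T : measurableType d) (R : realType)
  (P : probability T R) (I : eqType) (X : I -> T -> seq nat) : Prop :=
  forall (F : seq I) (s : I -> seq nat), uniq F ->
    P (\bigcap_(i in [set` F]) [set w | X i w = s i]) =
    (\prod_(i <- F) P [set w | X i w = s i])%E.

(* The Galton-Watson process started from one individual of type i0: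
   the individual at position k of generation n, of type t, has offspring
   xi n t k w. *)
Fixpoint gw (T : Type) (xi : nat -> nat -> nat -> T -> seq nat) (i0 : nat)
  (n : nat) (w : T) : seq nat :=
  match n with
  | 0 => [:: i0]
  | m.+1 => let z := gw xi i0 m w in
            flatten [seq xi m (nth 0%N z k) k w | k <- iota 0 (size z)]
  end.

(* Mean progeny matrix: M i j = E[number of type-j children of a type-i
   individual], with offspring law p i (a pmf on finite lists of types). *)
Definition mean_matrix (R : realType) (p : nat -> seq nat -> R) (i j : nat)
  : \bar R :=
  (\esum_(s in [set: seq nat]) ((p i s) * (count_mem j s)%:R)%:E)%E.

(* Irreducibility: for all i j, (M^n)_{ij} > 0 for some n >= 1, i.e. there
   is a nonempty path of positive entries from i to j. *)
Definition irreducible (R : realType) (M : nat -> nat -> \bar R) : Prop :=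
  forall i j : nat, exists l : seq nat,
    [/\ l != [::], path (fun a b => (0 < M a b)%E) i l & last i l = j].

Definition extinct (zsize : nat -> nat) : Prop :=
  exists N, forall n, (N <= n)%N -> zsize n = 0%N.

Definition explodes (zsize : nat -> nat) : Prop :=
  forall K, exists N, forall n, (N <= n)%N -> (K <= zsize n)%N.

(* Main.v *)
Require Import Defs.
From HB Require Import structures.
From mathcomp Require Import all_boot all_order all_algebra.
From mathcomp Require Import all_classical all_reals all_analysis.
Set Implicit Arguments. Unset Strict Implicit. Unset Printing Implicit Defensive.
Import Order.TTheory GRing.Theory Num.Theory.
Local Open Scope classical_set_scope.
Local Open Scope ring_scope.
Local Open Scope ereal_scope.

Section generic.
Context {R : realType}.

Definition ser (I : countType) (D : set I) (f : I -> \bar R) (n : nat) : \bar R :=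
  if pickle_inv n is Some a then (if a \in D then f a else 0) else 0.

Lemma ser_ge0 (I : countType) (D : set I) (f : I -> \bar R) :
  (forall a, D a -> 0 <= f a) -> forall n, 0 <= ser D f n.
Proof.
move=> f0 n; rewrite /ser; destruct (pickle_inv n) as [a|] => //; case: ifP => // /set_mem.
exact: f0.
Qed.

Lemma esum_ser (I : countType) (D : set I) (f : I -> \bar R) :
  (forall a, D a -> 0 <= f a) ->
  \esum_(a in D) f a = \sum_(n <oo) ser D f n.
Proof.
move=> f0; rewrite nneseries_esumT; last exact: ser_ge0.
rewrite esum_mkcond.
have -> : \esum_(n in [set: nat]) ser D f n = \esum_(n in range (@pickle I)) ser D f n.
  rewrite [RHS]esum_mkcond; apply: eq_esum => n _.
  case: ifPn => // /negP nr; rewrite /ser.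
  destruct (pickle_inv n) as [a|] eqn:E => //; exfalso; apply: nr; apply/mem_set.
  by exists a => //; have := @pickle_invK I n; rewrite E.
rewrite (@reindex_esum R I nat [set: I] (range (@pickle I)) pickle (ser D f)).
  by apply: eq_esum => a _; rewrite /ser pickleK_inv.
split.
- by move=> a _; exists a.
- by move=> a b _ _ /(pcan_inj pickleK_inv).
- by move=> n [a _ <-]; exists a.
Qed.

Lemma esumZl (I : countType) (D : set I) (f : I -> \bar R) (k : R) :
  (0 <= k)%R -> (forall a, D a -> 0 <= f a) ->
  \esum_(a in D) (k%:E * f a) = k%:E * \esum_(a in D) f a.
Proof.
move=> k0 f0; rewrite !esum_ser //; last by move=> a Da; rewrite mule_ge0 // ?lee_fin // f0.
rewrite -nneseriesZl; last by move=> n _; exact: ser_ge0.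
apply: eq_eseriesr => n _; rewrite /ser; destruct (pickle_inv n) as [a|] => // ; last by rewrite mule0.
by case: ifP => //; rewrite mule0.
Qed.

Lemma esum_single (I : choiceType) (D : set I) (f : I -> \bar R) (a0 : I) :
  (forall a, D a -> 0 <= f a) -> D a0 -> (forall a, D a -> a <> a0 -> f a = 0) ->
  \esum_(a in D) f a = f a0.
Proof.
move=> f0 Da0 fz; rewrite (esumID [set a0]); last by [].
rewrite [X in _ + X]esum1 ?adde0; last first.
  by move=> a [Da /= na]; apply: fz.
have -> : D `&` [set a0] = [set a0] by apply/seteqP; split=> [a [] //|a /= ->].
by rewrite esum_set1 // f0.
Qed.

Lemma integral_indic_esum d (T : measurableType d) (P : {measure set T -> \bar R})
  (I : countType) (D : set I) (g : I -> R) (H : I -> set T) :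
  (forall a, D a -> (0 <= g a)%R) -> (forall a, D a -> measurable (H a)) ->
  \int[P]_w (\esum_(a in D) ((g a)%:E * (\1_(H a) w)%:E)) =
  \esum_(a in D) ((g a)%:E * P (H a)).
Proof.
move=> g0 mH.
have ge0 w : forall a, D a -> 0 <= (g a)%:E * (\1_(H a) w)%:E.
  by move=> a Da; rewrite mule_ge0 // lee_fin // g0.
under eq_integral => w _ do rewrite (esum_ser (ge0 w)).
rewrite integral_nneseries //; last 2 first.
- move=> n; rewrite /ser; destruct (pickle_inv n) as [a|]; last exact: measurable_cst.
  case: (boolP (a \in D)) => [/set_mem Da|_]; last exact: measurable_cst.
  apply/measurable_realfun.measurable_EFinP => /=.
  apply: measurable_realfun.measurable_funM; first exact: measurable_cst.
  exact: measurable_realfun.measurable_indic (mH _ Da).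
- by move=> n w _; apply: ser_ge0; exact: ge0.
rewrite esum_ser; last by move=> a Da; rewrite mule_ge0 // ?lee_fin ?g0 //.
apply: eq_eseriesr => n _; rewrite /ser; destruct (pickle_inv n) as [a|]; last by rewrite integral0.
case: (boolP (a \in D)) => [/set_mem Da|_]; last by rewrite integral0.
rewrite ge0_integralZl_EFin //; first last.
- exact: g0.
- by apply/measurable_realfun.measurable_EFinP; exact: measurable_realfun.measurable_indic (mH _ Da).
by rewrite integral_indic // ?setIT //; exact: mH.
Qed.

Lemma total_eq d (T : measurableType d) (P : {measure set T -> \bar R})
  (I J : countType) (D : set I) (g : I -> R) (H : I -> set T)
  (D' : set J) (g' : J -> R) (H' : J -> set T) :
  (forall a, D a -> (0 <= g a)%R) -> (forall a, D a -> measurable (H a)) ->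
  (forall a, D' a -> (0 <= g' a)%R) -> (forall a, D' a -> measurable (H' a)) ->
  (forall w, \esum_(a in D) ((g a)%:E * (\1_(H a) w)%:E) =
             \esum_(a in D') ((g' a)%:E * (\1_(H' a) w)%:E)) ->
  \esum_(a in D) ((g a)%:E * P (H a)) = \esum_(a in D') ((g' a)%:E * P (H' a)).
Proof.
move=> g0 mH g0' mH' e.
rewrite -integral_indic_esum // -integral_indic_esum //.
by apply: eq_integral => w _; exact: e.
Qed.

End generic.

Lemma mbigcup d (T : measurableType d) (I : countType) (D : set I) (F : I -> set T) :
  (forall a, D a -> measurable (F a)) -> measurable (\bigcup_(a in D) F a).
Proof.
move=> mF; rewrite bigcup_mkcond; apply: countable_bigcupT_measurable.
  exact: countableP.
by move=> a; case: ifPn => // /set_mem /mF.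
Qed.

Lemma mbigcap d (T : measurableType d) (I : countType) (D : set I) (F : I -> set T) :
  (forall a, D a -> measurable (F a)) -> measurable (\bigcap_(a in D) F a).
Proof.
move=> mF; rewrite -[X in measurable X]setCK setC_bigcap; apply: measurableC.
by apply: mbigcup => a /mF; exact: measurableC.
Qed.


Section generic2.
Context {R : realType}.

Lemma esumZe (I : countType) (D : set I) (f : I -> \bar R) (k : \bar R) :
  k \is a fin_num -> 0 <= k -> (forall a, D a -> 0 <= f a) ->
  \esum_(a in D) (k * f a) = k * \esum_(a in D) f a.
Proof.
move=> kf k0 f0; rewrite -(fineK kf) esumZl //; exact: fine_ge0.
Qed.

Lemma esum_ord (f : nat -> \bar R) m : (forall k, 0 <= f k) ->
  \esum_(k in [set k | (k < m)%N]) f k = \sum_(k < m) f k.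
Proof.
move=> f0; elim: m => [|m IH].
  by rewrite big_ord0 (_ : [set k | _] = set0) ?esum_set0 //; apply/seteqP; split.
rewrite big_ord_recr /= (esumID [set m]) //.
have -> : [set k | (k < m.+1)%N] `&` [set m] = [set m].
  by apply/seteqP; split => [k [] //|k /= ->]; split.
have -> : [set k | (k < m.+1)%N] `&` ~` [set m] = [set k | (k < m)%N].
  apply/seteqP; split => k /=.
    by move=> [km /eqP nkm]; rewrite ltn_neqAle nkm -ltnS.
  by move=> km; split; [exact: ltnW|move=> e; rewrite e ltnn in km].
by rewrite esum_set1 // IH addeC.
Qed.

Lemma esum_cnt (z : seq nat) (f : nat -> \bar R) : (forall t, 0 <= f t) ->
  \esum_(t in [set: nat]) ((count_mem t z)%:R)%:E * f t = \sum_(t <- z) f t.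
Proof.
move=> f0; elim: z => [|a z IH].
  by rewrite big_nil esum1 // => t _; rewrite /= mul0e.
rewrite big_cons -IH.
have -> : (fun t => ((count_mem t (a :: z))%:R)%:E * f t) =
    (fun t => ((a == t)%:R)%:E * f t + ((count_mem t z)%:R)%:E * f t).
  by apply: funext => t /=; rewrite natrD EFinD ge0_muleDl // lee_fin.
rewrite esumD //; last 2 first.
- by move=> t _; rewrite mule_ge0 // lee_fin.
- by move=> t _; rewrite mule_ge0 // lee_fin.
congr (_ + _); rewrite (@esum_single _ _ _ _ a) //.
- by rewrite eqxx mul1e.
- by move=> t _; rewrite mule_ge0 // lee_fin.
- by move=> t _ ta; rewrite (_ : (a == t) = false) ?mul0e //; apply/eqP => e; apply: ta.
Qed.

Lemma esum_swap (I J : choiceType) (a : I -> J -> \bar R) :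
  (forall i j, 0 <= a i j) ->
  \esum_(i in [set: I]) \esum_(j in [set: J]) a i j =
  \esum_(j in [set: J]) \esum_(i in [set: I]) a i j.
Proof.
move=> a0; rewrite !esum_esum //.
rewrite (reindex_esum ([set: J] `*`` (fun _ => [set: I])) _ (fun x => (x.2, x.1))) //.
split.
- by move=> [j i] _.
- by move=> [i1 i2] [j1 j2] /= _ _ [] -> ->.
- by move=> [i j] _; exists (j, i).
Qed.

End generic2.
Section GW.
Context d (T : measurableType d) (R : realType) (P : probability T R)
  (p : nat -> seq nat -> R) (xi : nat -> nat -> nat -> T -> seq nat)
  (xi_meas : forall n i k s, measurable [set w | xi n i k w = s])
  (i0 : nat).

Let Z n w := gw xi i0 n w.
Let E n z := [set w | Z n w = z].
Definition Gz n (z : seq nat) (ls : seq (seq nat)) : set T :=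
  [set w | forall k, (k < size z)%N -> xi n (nth 0%N z k) k w = nth [::] ls k].
Definition Dz (z' : seq nat) : set (seq nat * seq (seq nat)) :=
  [set a | size a.2 = size a.1 /\ flatten a.2 = z'].

Lemma Gz_eq n z ls w : Gz n z ls w -> size ls = size z ->
  ls = [seq xi n (nth 0%N z k) k w | k <- iota 0 (size z)].
Proof.
move=> G sz; apply: (@eq_from_nth _ [::]); first by rewrite size_map size_iota.
move=> k; rewrite sz => kz.
by rewrite (nth_map 0%N) ?size_iota // nth_iota // add0n G.
Qed.

Lemma dec n w z' : Z n.+1 w = z' <->
  exists a, Dz z' a /\ Z n w = a.1 /\ Gz n a.1 a.2 w.
Proof.
split.
  move=> <-; exists (Z n w, [seq xi n (nth 0%N (Z n w) k) k w | k <- iota 0 (size (Z n w))]).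
  split; first by split => //=; rewrite size_map size_iota.
  split => // k kz /=.
  by rewrite (nth_map 0%N) ?size_iota // nth_iota.
move=> [[z ls] [[/= sz fl] [/= zE G]]].
by rewrite /Z /= -/(Z n w) zE -(Gz_eq G sz).
Qed.

Lemma Gz_meas n z ls : measurable (Gz n z ls).
Proof.
have -> : Gz n z ls = \bigcap_(k in [set k | (k < size z)%N])
    [set w | xi n (nth 0%N z k) k w = nth [::] ls k].
  by apply/seteqP; split => w /= H k /H.
by apply: bigcap_measurableType => k _; exact: xi_meas.
Qed.

Lemma E_meas n z : measurable (E n z).
Proof.
elim: n z => [|n IH] z.
  rewrite /E /Z /=; case: (eqVneq [:: i0] z) => [<-|nz].
    by rewrite (_ : [set w | _] = setT) //; apply/seteqP; split.
  by rewrite (_ : [set w | _] = set0) //; apply/seteqP; split => // w /= /eqP; rewrite (negPf nz).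
have -> : E n.+1 z = \bigcup_(a in Dz z) (E n a.1 `&` Gz n a.1 a.2).
  apply/seteqP; split => w.
    by move=> /dec [a [Da [zE G]]]; exists a.
  by move=> [a Da [zE G]]; apply/dec; exists a.
apply: mbigcup => a _; apply: measurableI; [exact: IH|exact: Gz_meas].
Qed.


Lemma ind1 (A : set T) w : A w -> \1_A w = 1%R :> R.
Proof. by move=> Aw; rewrite indicE mem_set. Qed.
Lemma ind0 (A : set T) w : ~ A w -> \1_A w = 0%R :> R.
Proof. by move=> Aw; rewrite indicE memNset. Qed.

Lemma esum_unit (f : unit -> \bar R) : 0 <= f tt -> \esum_(u in [set: unit]) f u = f tt.
Proof.
move=> f0; apply: (@esum_single _ _ _ _ tt) => //.
- by move=> [].
- by move=> [] _ [].
Qed.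

Lemma key n z' (G : set T) : measurable G ->
  P (E n.+1 z' `&` G) = \esum_(a in Dz z') P (E n a.1 `&` Gz n a.1 a.2 `&` G).
Proof.
move=> mG.
have := @total_eq _ _ _ P unit _ [set: unit] (fun _ => 1%R) (fun _ => E n.+1 z' `&` G)
  (Dz z') (fun _ => 1%R) (fun a => E n a.1 `&` Gz n a.1 a.2 `&` G).
rewrite esum_unit; last by rewrite mule_ge0 // lee_fin.
rewrite mul1e.
under eq_esum do rewrite mul1e.
apply => //.
- by move=> _ _; apply: measurableI => //; exact: E_meas.
- by move=> a _; apply: measurableI => //; apply: measurableI; [exact: E_meas|exact: Gz_meas].
move=> w; rewrite esum_unit; last by rewrite mule_ge0 // lee_fin.
have [[/dec [a0 [Da0 [zE G0]]] Gw]|hw] := pselect ((E n.+1 z' `&` G) w).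
  rewrite ind1; last by split => //; apply/dec; exists a0.
  rewrite (@esum_single _ _ _ _ a0) //.
  - by rewrite ind1.
  move=> a Da na; rewrite ind0 ?mule0 // => -[[za Ga] _]; apply: na.
  move: Da0 Da => [s0 _] [s1 _]; case: a0 a za Ga s1 zE G0 s0 => [z0 l0] [z1 l1] /= za Ga s1 zE G0 s0.
  rewrite -za in zE s1 Ga *; subst z0.
  by rewrite (Gz_eq Ga s1) (Gz_eq G0 s0).
rewrite ind0 // mule0 esum1 // => a Da.
rewrite ind0 ?mule0 // => -[[za Ga] Gw]; apply: hw; split => //.
by apply/dec; exists a.
Qed.


Context (xi_indep : mutually_independent P
                (fun nik : nat * nat * nat => xi nik.1.1 nik.1.2 nik.2)).

Definition GF (F : seq (nat * nat * nat)) (s : nat * nat * nat -> seq nat) : set T :=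
  \bigcap_(f in [set` F]) [set w | xi f.1.1 f.1.2 f.2 w = s f].
Definition Fz n (z : seq nat) : seq (nat * nat * nat) :=
  [seq (n, nth 0%N z k, k) | k <- iota 0 (size z)].
Definition sz n (ls : seq (seq nat)) (s : nat * nat * nat -> seq nat) f :=
  if f.1.1 == n then nth [::] ls f.2 else s f.

Lemma GF_meas F s : measurable (GF F s).
Proof. by apply: mbigcap => f _; exact: xi_meas. Qed.

Lemma GF_nil s : GF [::] s = setT.
Proof. by apply/seteqP; split => // w _ f. Qed.

Lemma GzGF n z ls F s : (forall f, f \in F -> (n < f.1.1)%N) ->
  Gz n z ls `&` GF F s = GF (Fz n z ++ F) (sz n ls s).
Proof.
move=> hF; apply/seteqP; split => w.
  move=> [G HF] f /=; rewrite mem_cat => /orP[/mapP[k]|fF].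
    by rewrite mem_iota add0n => /andP[_ kz] -> /=; rewrite /sz eqxx /= G.
  have := hF _ fF; rewrite /sz; case: eqP => [->|_ _]; first by rewrite ltnn.
  exact: HF.
move=> H; split.
  move=> k kz; have := H (n, nth 0%N z k, k).
  rewrite /sz /= eqxx /=; apply; rewrite mem_cat; apply/orP; left.
  by apply: map_f; rewrite mem_iota add0n.
move=> f fF; have := H f; rewrite /sz /=.
have := hF _ fF; case: eqP => [->|_ _]; first by rewrite ltnn.
by apply; rewrite mem_cat fF orbT.
Qed.

Lemma PGF F s : uniq F -> P (GF F s) = \prod_(f <- F) P [set w | xi f.1.1 f.1.2 f.2 w = s f].
Proof. by move=> uF; have := xi_indep s uF. Qed.

Lemma Fz_uniq n z : uniq (Fz n z).
Proof.
rewrite /Fz map_inj_in_uniq ?iota_uniq // => k1 k2 _ _ [] _ //.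
Qed.

Lemma indep n : forall z F s, uniq F -> (forall f, f \in F -> (n <= f.1.1)%N) ->
  P (E n z `&` GF F s) = P (E n z) * P (GF F s).
Proof.
elim: n => [|n IH] z F s uF hF.
  rewrite /E /Z /=; case: (eqVneq [:: i0] z) => [<-|nz].
    rewrite (_ : [set w | _] = setT); last by apply/seteqP; split.
    by rewrite setTI probability_setT mul1e.
  rewrite (_ : [set w | _] = set0); last first.
    by apply/seteqP; split => // w /= /eqP; rewrite (negPf nz).
  by rewrite set0I measure0 mul0e.
have hF' f : f \in F -> (n < f.1.1)%N by move/hF.
have uF' (a : seq nat * seq (seq nat)) : uniq (Fz n a.1 ++ F).
  rewrite cat_uniq Fz_uniq uF andbT /=; apply/hasPn => f fF.
  apply/negP => /mapP[k _ fE]; have := hF' _ fF; rewrite fE /= ltnn //.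
have hF'' (a : seq nat * seq (seq nat)) f : f \in Fz n a.1 ++ F -> (n <= f.1.1)%N.
  rewrite mem_cat => /orP[/mapP[k _ ->] //|/hF' /ltnW //].
have term (a : seq nat * seq (seq nat)) : P (E n a.1 `&` Gz n a.1 a.2 `&` GF F s) =
    P (E n a.1 `&` Gz n a.1 a.2 `&` setT) * P (GF F s).
  rewrite setIT -setIA GzGF // (IH _ _ _ (uF' a) (hF'' a)).
  rewrite -(setIT (Gz n a.1 a.2)) -(GF_nil s) GzGF // cats0 IH //; last first.
    by move=> f fz; apply: (hF'' a); rewrite mem_cat fz.
    exact: Fz_uniq.
  rewrite -muleA; congr (_ * _).
  rewrite !PGF ?Fz_uniq // big_cat /=; congr (_ * _).
  apply: eq_big_seq => f /hF'; rewrite /sz; case: eqP => // ->; by rewrite ltnn.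
rewrite key; last exact: GF_meas.
under eq_esum do rewrite term.
rewrite -[X in _ = P X * _]setIT key; last exact: measurableT.
have fin : P (GF F s) \is a fin_num by rewrite fin_num_measure //; exact: GF_meas.
rewrite -(fineK fin); under eq_esum do rewrite muleC.
rewrite esumZl; first by rewrite muleC.
all: try by rewrite fine_ge0 // measure_ge0.
all: by move=> a _; exact: measure_ge0.
Qed.

Context (xi_law : forall n i k s, P [set w | xi n i k w = s] = (p i s)%:E).

Lemma p_ge0 t s : (0 <= p t s)%R.
Proof. by rewrite -lee_fin -(xi_law 0 t 0 s) measure_ge0. Qed.

Lemma M_ge0 t j : 0 <= mean_matrix p t j.
Proof. by apply: esum_ge0 => s _; rewrite lee_fin mulr_ge0 // p_ge0. Qed.

Definition cnt j (z : seq nat) : R := (count_mem j z)%:R.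
Definition A n j := \esum_(z in [set: seq nat]) (cnt j z)%:E * P (E n z).
Definition Dk := [set a : seq nat * (nat * seq nat) | (a.2.1 < size a.1)%N].
Definition Hk n (a : seq nat * (nat * seq nat)) :=
  E n a.1 `&` [set w | xi n (nth 0%N a.1 a.2.1) a.2.1 w = a.2.2].

Lemma cnt_ge0 j z : (0 <= cnt j z)%R.
Proof. by rewrite /cnt. Qed.

Lemma pt1 n j w : (cnt j (Z n w))%:E =
  \esum_(z in [set: seq nat]) (cnt j z)%:E * (\1_(E n z) w)%:E.
Proof.
rewrite (@esum_single _ _ _ _ (Z n w)) //.
- by rewrite ind1 // mule1.
- by move=> z _; rewrite mule_ge0 // lee_fin cnt_ge0.
- by move=> z _ nz; rewrite ind0 ?mule0 // => e; apply: nz; rewrite -e.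
Qed.

Lemma pt2 n j w : (cnt j (Z n.+1 w))%:E =
  \esum_(a in Dk) (cnt j a.2.2)%:E * (\1_(Hk n a) w)%:E.
Proof.
have ge0 a : 0 <= (cnt j a.2.2)%:E * (\1_(Hk n a) w)%:E.
  by rewrite mule_ge0 // lee_fin cnt_ge0.
transitivity (\esum_(z in [set: seq nat]) \esum_(b in [set b : nat * seq nat | (b.1 < size z)%N])
    (cnt j b.2)%:E * (\1_(Hk n (z, b)) w)%:E); last first.
  rewrite esum_esum; last by move=> z b _ _; exact: (ge0 (z, b)).
  have -> : Dk = [set: seq nat] `*`` (fun z => [set b : nat * seq nat | (b.1 < size z)%N]).
    by apply/seteqP; split => x /=; rewrite /Dk /=; [move=> h; split|case].
  by apply: eq_esum => -[z b].
rewrite (@esum_single _ _ _ _ (Z n w)) //; first last.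
- move=> z _ nz; rewrite esum1 // => b _; rewrite ind0 ?mule0 // => -[/= e _].
  by apply: nz; rewrite e.
- by move=> z _; apply: esum_ge0 => b _; exact: (ge0 (z, b)).
set z0 := Z n w.
transitivity (\esum_(k in [set k | (k < size z0)%N]) \esum_(s in [set: seq nat])
    (cnt j s)%:E * (\1_(Hk n (z0, (k, s))) w)%:E); last first.
  rewrite esum_esum; last by move=> k s _ _; exact: (ge0 (z0, (k, s))).
  have -> : [set b : nat * seq nat | (b.1 < size z0)%N] =
      [set k | (k < size z0)%N] `*`` (fun _ => [set: seq nat]).
    by apply/seteqP; split => x /=; [move=> h; split|case].
  by apply: eq_esum => -[k s].
transitivity (\esum_(k in [set k | (k < size z0)%N]) (cnt j (xi n (nth 0%N z0 k) k w))%:E).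
  rewrite esum_ord; last by move=> k; rewrite lee_fin cnt_ge0.
  rewrite /cnt /Z /= -/(Z n w) -/z0 count_flatten sumnE big_map natr_sum sumEFin.
  have -> : iota 0 (size z0) = index_iota 0 (size z0) by rewrite /index_iota subn0.
  by rewrite big_map big_mkord.
apply: eq_esum => k _; rewrite (@esum_single _ _ _ _ (xi n (nth 0%N z0 k) k w)) //.
- by rewrite ind1 ?mule1.
- by move=> s _; exact: (ge0 (z0, (k, s))).
- by move=> s _ ns; rewrite ind0 ?mule0 // => -[_ /= e]; apply: ns; rewrite e.
Qed.

Lemma PHk n a : P (Hk n a) = P (E n a.1) * (p (nth 0%N a.1 a.2.1) a.2.2)%:E.
Proof.
have -> : Hk n a = E n a.1 `&` GF [:: (n, nth 0%N a.1 a.2.1, a.2.1)] (fun _ => a.2.2).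
  congr (_ `&` _); apply/seteqP; split => w /=.
    by move=> e f; rewrite /= inE => /eqP ->.
  by move=> H; apply: (H (n, nth 0%N a.1 a.2.1, a.2.1)); rewrite /= inE.
rewrite indep //; last by move=> f; rewrite inE => /eqP ->.
by rewrite PGF // big_seq1 xi_law.
Qed.

Lemma Aeq n j : A n.+1 j =
  \esum_(z in [set: seq nat]) P (E n z) * \sum_(t <- z) mean_matrix p t j.
Proof.
have := @total_eq _ _ _ P _ _ [set: seq nat] (cnt j) (E n.+1) Dk (fun a => cnt j a.2.2) (Hk n).
rewrite /A => ->; last 5 first.
- by move=> z _; exact: cnt_ge0.
- by move=> z _; exact: E_meas.
- by move=> a _; exact: cnt_ge0.
- move=> a _; apply: measurableI; [exact: E_meas|exact: xi_meas].
- by move=> w; rewrite -pt1 -pt2.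
transitivity (\esum_(a in Dk) (cnt j a.2.2)%:E * (P (E n a.1) * (p (nth 0%N a.1 a.2.1) a.2.2)%:E)).
  by apply: eq_esum => a _; congr (_ * _); exact: PHk.
have ge0 a : 0 <= (cnt j a.2.2)%:E * (P (E n a.1) * (p (nth 0%N a.1 a.2.1) a.2.2)%:E).
  by rewrite mule_ge0 ?mule_ge0 // lee_fin ?cnt_ge0 ?p_ge0.
have -> : Dk = [set: seq nat] `*`` (fun z => [set b : nat * seq nat | (b.1 < size z)%N]).
  by apply/seteqP; split => x /=; rewrite /Dk /=; [move=> h; split|case].
rewrite -(esum_esum (a := fun z b => (cnt j b.2)%:E * (P (E n z) * (p (nth 0%N z b.1) b.2)%:E))); last first.
  by move=> z b _ _; exact: (ge0 (z, b)).
apply: eq_esum => z _.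
have fin : P (E n z) \is a fin_num by rewrite fin_num_measure //; exact: E_meas.
under eq_esum do rewrite muleCA -EFinM.
rewrite esumZe //; last by move=> b _; rewrite lee_fin mulr_ge0 ?p_ge0 ?cnt_ge0.
congr (_ * _).
transitivity (\esum_(k in [set k | (k < size z)%N]) \esum_(s in [set: seq nat])
    (cnt j s * (p (nth 0%N z k) s))%:E).
  rewrite esum_esum; last by move=> k s _ _; rewrite lee_fin mulr_ge0 ?p_ge0 ?cnt_ge0.
  have -> : [set b : nat * seq nat | (b.1 < size z)%N] =
      [set k | (k < size z)%N] `*`` (fun _ => [set: seq nat]).
    by apply/seteqP; split => x /=; [move=> h; split|case].
  by apply: eq_esum => -[k s].
transitivity (\esum_(k in [set k | (k < size z)%N]) mean_matrix p (nth 0%N z k) j).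
  by apply: eq_esum => k _; apply: eq_esum => s _; rewrite mulrC.
rewrite esum_ord; last by move=> k; exact: M_ge0.
by rewrite (big_nth 0%N) big_mkord.
Qed.


Lemma A_ge0 n t : 0 <= A n t.
Proof. by apply: esum_ge0 => z _; rewrite mule_ge0 // lee_fin cnt_ge0. Qed.

Lemma PE_fin n z : P (E n z) \is a fin_num.
Proof. by rewrite fin_num_measure //; exact: E_meas. Qed.

Lemma swapid n (f : nat -> \bar R) : (forall t, 0 <= f t) -> (forall t, f t \is a fin_num) ->
  \esum_(z in [set: seq nat]) P (E n z) * \sum_(t <- z) f t =
  \esum_(t in [set: nat]) f t * A n t.
Proof.
move=> f0 ffin.
have ge0 z t : 0 <= ((count_mem t z)%:R)%:E * f t by rewrite mule_ge0 // lee_fin.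
under eq_esum => z _ do rewrite -(esum_cnt z f0) -esumZe ?PE_fin //.
rewrite esum_swap; last by move=> z t; rewrite mule_ge0 //.
apply: eq_esum => t _; rewrite /A -esumZe //; last first.
  by move=> z _; rewrite mule_ge0 // lee_fin cnt_ge0.
apply: eq_esum => z _; rewrite /cnt.
by rewrite (muleC (P (E n z))) -muleA [RHS]muleCA.
Qed.

Lemma A0 j : A 0 j = (cnt j [:: i0])%:E.
Proof.
rewrite /A (@esum_single _ _ _ _ [:: i0]) //.
- rewrite (_ : E 0 [:: i0] = setT) ?probability_setT ?mule1 //.
  by apply/seteqP; split.
- by move=> z _; rewrite mule_ge0 // lee_fin cnt_ge0.
- move=> z _ nz; rewrite (_ : E 0 z = set0) ?measure0 ?mule0 //.
  by apply/seteqP; split => // w /= e; apply: nz; rewrite -e.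
Qed.

Context (M_finite : forall i j, (mean_matrix p i j < +oo)%E).

Lemma M_fin t j : mean_matrix p t j \is a fin_num.
Proof.
rewrite fin_numE; apply/andP; split; last by apply/eqP => e; have := M_finite t j; rewrite e ltxx.
by apply/eqP => e; have := M_ge0 t j; rewrite e leeNy_eq.
Qed.

Lemma AS n j : A n.+1 j = \esum_(t in [set: nat]) mean_matrix p t j * A n t.
Proof.
rewrite Aeq; apply: (swapid n (f := fun t => mean_matrix p t j)).
- by move=> t; exact: M_ge0.
- by move=> t; exact: M_fin.
Qed.


Context (lambda : R) (x : nat -> R) (lambda_le1 : (lambda <= 1)%R)
  (x_pos : forall i, (0 < x i)%R)
  (x_sum : (\esum_(i in [set: nat]) (x i)%:E < +oo)%E)
  (xM_le : forall j, (\esum_(i in [set: nat]) ((x i)%:E * mean_matrix p i j)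
                      <= (lambda * x j)%:E)%E).

Lemma Abound n j : (x i0)%:E * A n j <= (x j)%:E.
Proof.
elim: n j => [|n IH] j.
  rewrite A0 /cnt /= -EFinM lee_fin; case: eqP => [->|_] /=.
    by rewrite addn0 mulr1.
  by rewrite mulr0 ltW.
rewrite AS -esumZl; last 2 first.
- exact: ltW.
- by move=> t _; rewrite mule_ge0 ?A_ge0 ?M_ge0.
apply: (@le_trans _ _ (\esum_(t in [set: nat]) (x t)%:E * mean_matrix p t j)).
  apply: le_esum => t _; rewrite muleCA muleC.
  by apply: lee_wpmul2r; [exact: M_ge0|exact: IH].
apply: (le_trans (xM_le j)); rewrite lee_fin.
by rewrite -[X in (_ <= X)%R]mul1r ler_wpM2r // ltW.
Qed.

Lemma sum1_size (z : seq nat) : \sum_(t <- z) (1 : \bar R) = ((size z)%:R)%:E.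
Proof.
elim: z => [|a z IH]; first by rewrite big_nil.
by rewrite big_cons IH /= -EFinD -natr1 addrC.
Qed.

Definition Cst := ((x i0)^-1)%:E * \esum_(t in [set: nat]) (x t)%:E.

Lemma Esize n : \esum_(z in [set: seq nat]) ((size z)%:R)%:E * P (E n z) <= Cst.
Proof.
have -> : \esum_(z in [set: seq nat]) ((size z)%:R)%:E * P (E n z) =
    \esum_(t in [set: nat]) 1 * A n t.
  rewrite -(swapid n (f := fun=> 1)) //; apply: eq_esum => z _.
  by rewrite sum1_size muleC.
rewrite /Cst -esumZl; last 2 first.
- by rewrite invr_ge0 ltW.
- by move=> t _; rewrite lee_fin ltW.
apply: le_esum => t _; rewrite mul1e.
have xi0 := x_pos i0.
rewrite -(@lee_pmul2l _ (x i0)%:E) ?lte_fin //.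
rewrite (le_trans (Abound n t)) // muleA -EFinM mulfV ?mul1e ?mul1r //.
by apply/eqP => e; rewrite e ltxx in xi0.
Qed.

Lemma markov n K : (K%:R)%:E * P [set w | (K <= size (Z n w))%N] <= Cst.
Proof.
have := @total_eq _ _ _ P unit _ [set: unit] (fun _ => 1%R)
  (fun _ => [set w | (K <= size (Z n w))%N])
  [set z | (K <= size z)%N] (fun _ => 1%R) (E n).
rewrite esum_unit; last by rewrite mule_ge0 // lee_fin.
rewrite mul1e => ->; last 5 first.
- by [].
- move=> _ _; rewrite (_ : [set w | _] = \bigcup_(z in [set z | (K <= size z)%N]) E n z).
    by apply: mbigcup => z _; exact: E_meas.
  by apply/seteqP; split => w /=; [move=> h; exists (Z n w)|move=> [z /= h ->]].
- by [].
- by move=> z _; exact: E_meas.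
- move=> w; rewrite esum_unit; last by rewrite mule_ge0 // lee_fin.
  have [hw|hw] := pselect (K <= size (Z n w))%N.
    rewrite (@esum_single _ _ _ _ (Z n w)) //.
    all: try by move=> z _; rewrite mule_ge0 // lee_fin.
    all: try by move=> z _ nz; rewrite ind0 ?mule0 // => e; apply: nz; rewrite -e.
    by rewrite !ind1.
  rewrite ind0 // mule0 esum1 // => z Kz; rewrite ind0 ?mule0 // => e.
  by apply: hw; rewrite e.
under eq_esum do rewrite mul1e.
rewrite -esumZl; last 2 first.
- by [].
- by move=> z _; exact: measure_ge0.
apply: le_trans (Esize n).
rewrite [X in _ <= X]esum_mkcond [X in X <= _]esum_mkcond.
apply: le_esum => z _; rewrite in_setT; case: ifPn => [/set_mem /= Kz|_].
  by apply: lee_wpmul2r; [exact: measure_ge0|rewrite lee_fin ler_nat].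
by rewrite mule_ge0 ?measure_ge0 // lee_fin.
Qed.


Definition B K n := [set w | (K <= size (Z n w))%N].

Lemma B_meas K n : measurable (B K n).
Proof.
rewrite (_ : B K n = \bigcup_(z in [set z | (K <= size z)%N]) E n z).
  by apply: mbigcup => z _; exact: E_meas.
by apply/seteqP; split => w /=; rewrite /B /=; [move=> h; exists (Z n w)|move=> [z /= h ->]].
Qed.

Definition C K N := \bigcap_(n in [set n | (N <= n)%N]) B K n.

Lemma C_meas K N : measurable (C K N).
Proof. by apply: mbigcap => n _; exact: B_meas. Qed.

Lemma S_fin : \esum_(t in [set: nat]) (x t)%:E \is a fin_num.
Proof.
rewrite fin_numE; apply/andP; split; last by apply/eqP => e; move: x_sum; rewrite e ltxx.
apply/eqP => e; have : 0 <= \esum_(t in [set: nat]) (x t)%:E.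
  by apply: esum_ge0 => t _; rewrite lee_fin ltW.
by rewrite e leeNy_eq.
Qed.

Definition cst := ((x i0)^-1 * fine (\esum_(t in [set: nat]) (x t)%:E))%R.

Lemma Cst_cst : Cst = cst%:E.
Proof. by rewrite /Cst /cst EFinM fineK // S_fin. Qed.

Lemma PU K : (0 < K)%N -> P (\bigcup_N C K N) <= ((K%:R)^-1 * cst)%:E.
Proof.
move=> K0.
have Kp : (0 < (K%:R : R))%R by rewrite ltr0n.
have hom : {homo C K : n m / (n <= m)%N >-> (n <= m)%O}.
  by move=> a b ab; apply/subsetPset => w Cw n bn; apply: Cw; exact: leq_trans bn.
have cv := @nondecreasing_cvg_mu _ _ _ P (C K) (C_meas K) (bigcupT_measurable _ (C_meas K)) hom.
rewrite -(cvg_lim _ cv); last exact: ereal_hausdorff.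
apply: lime_le; first by apply/cvg_ex; eexists; exact: cv.
apply: nearW => N /=.
have h1 : P (C K N) <= P (B K N).
  apply: le_measure; rewrite ?inE; [exact: C_meas|exact: B_meas|].
  by move=> w Cw; apply: Cw => /=.
apply: (le_trans h1).
have hm := markov N K; rewrite Cst_cst in hm.
rewrite -(@lee_pmul2l _ (K%:R)%:E) ?lte_fin // -EFinM mulrA mulfV ?gt_eqF // mul1r.
exact: hm.
Qed.

Context (dich : P [set w | extinct (fun n => size (gw xi i0 n w))
                                  \/ explodes (fun n => size (gw xi i0 n w))] = 1%E).

Definition ext := [set w | extinct (fun n => size (Z n w))].
Definition expl := [set w | explodes (fun n => size (Z n w))].

Lemma ext_meas : measurable ext.
Proof.
rewrite (_ : ext = \bigcup_(N in [set: nat]) \bigcap_(n in [set n | (N <= n)%N]) E n [::]).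
  apply: mbigcup => N _; apply: mbigcap => n _; exact: E_meas.
apply/seteqP; split => w.
  by move=> [N h]; exists N => // n /= Nn; apply/eqP; rewrite -size_eq0; apply/eqP; exact: h.
by move=> [N _ h]; exists N => n Nn; rewrite (h n Nn).
Qed.

Lemma expl_meas : measurable expl.
Proof.
rewrite (_ : expl = \bigcap_(K in [set: nat]) \bigcup_(N in [set: nat]) C K N).
  apply: mbigcap => K _; apply: mbigcup => N _; exact: C_meas.
apply/seteqP; split => w.
  by move=> h K _; have [N hN] := h K; exists N => // n /= Nn; exact: hN.
by move=> h K; have [N _ hN] := h K I; exists N => n Nn; exact: hN.
Qed.

Lemma cst_ge0 : (0 <= cst)%R.
Proof.
rewrite /cst; apply: mulr_ge0; first by rewrite invr_ge0 ltW.
by apply: fine_ge0; apply: esum_ge0 => t _; rewrite lee_fin ltW.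
Qed.

Lemma Pexpl0 : P expl = 0.
Proof.
have le K : (0 < K)%N -> P expl <= ((K%:R)^-1 * cst)%:E.
  move=> K0; apply: le_trans (PU K0); apply: le_measure; rewrite ?inE.
  - exact: expl_meas.
  - exact: bigcupT_measurable (C_meas K).
  by move=> w h; have [N hN] := (h : expl w) K; exists N => // n Nn; exact: hN.
have fin : P expl \is a fin_num by rewrite fin_num_measure //; exact: expl_meas.
rewrite -(fineK fin); congr EFin; set r := fine (P expl).
have r0 : (0 <= r)%R by apply: fine_ge0; exact: measure_ge0.
apply/eqP; rewrite eq_le r0 andbT; rewrite leNgt; apply/negP => rp.
set K := (Num.Def.archi_bound (cst / r)).+1.
have hK : (cst / r < K%:R)%R.
  have hb := archi_boundP (divr_ge0 cst_ge0 r0).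
  by apply: (lt_trans hb); rewrite ltr_nat /K ltnSn.
have := le K isT; rewrite -(fineK fin) -/r lee_fin.
have Kp : (0 < (K%:R : R))%R by rewrite ltr0n.
rewrite leNgt; apply/negP/negPn.
by rewrite ltr_pdivrMl // -ltr_pdivrMr.
Qed.

Lemma ext1 : P ext = 1.
Proof.
apply/le_anti/andP; split; first exact: probability_le1 ext_meas.
have : P (ext `|` expl) = 1 by exact: dich.
move=> <-; apply: le_trans (measureU2 _ ext_meas expl_meas) _.
by rewrite [X in _ + X](_ : _ = 0) ?adde0 //; exact: Pexpl0.
Qed.

End GW.

Local Close Scope ereal_scope.

Theorem mainTheorem8 (d : measure_display) (T : measurableType d)
  (R : realType) (P : probability T R)
  (p : nat -> seq nat -> R)
  (xi : nat -> nat -> nat -> T -> seq nat)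
  (xi_meas : forall n i k s, measurable [set w | xi n i k w = s])
  (xi_law : forall n i k s, P [set w | xi n i k w = s] = (p i s)%:E)
  (xi_indep : mutually_independent P
                (fun nik : nat * nat * nat => xi nik.1.1 nik.1.2 nik.2))
  (M_finite : forall i j, (mean_matrix p i j < +oo)%E)
  (M_irr : irreducible (mean_matrix p))
  (dichotomy : forall i, P [set w | extinct (fun n => size (gw xi i n w))
                                  \/ explodes (fun n => size (gw xi i n w))] = 1%E)
  (lambda : R) (x : nat -> R)
  (lambda_le1 : lambda <= 1)
  (x_pos : forall i, 0 < x i)
  (x_sum : (\esum_(i in [set: nat]) (x i)%:E < +oo)%E)
  (xM_le : forall j, (\esum_(i in [set: nat]) ((x i)%:E * mean_matrix p i j)
                      <= (lambda * x j)%:E)%E) :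
  forall i, P [set w | extinct (fun n => size (gw xi i n w))] = 1%E.
Proof.
move=> i.
have h := (@ext1 _ _ _ _ _ _ xi_meas i xi_indep xi_law M_finite _ _ lambda_le1 x_pos x_sum xM_le (dichotomy i)).
exact: h.
Qed.
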